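(* Every epimorphism $E\colon\mathbf{B}\to\mathbf{C}$ in $\mathbf{Lens}$ is a coequaliser in $\mathbf{Lens}$ of its proxy kernel pair, and so is a regular epimorphism in $\mathbf{Lens}$.
   Context: A lens $F\colon \mathbf{A}\to\mathbf{B}$ between small categories consists of a functor $F\colon\mathbf{A}\to\mathbf{B}$ (the get functor) together with, for each object $A$ of $\mathbf{A}$, a function $\varphi_{F,A}$ from the set of morphisms of $\mathbf{B}$ with domain $FA$ to the set of morphisms of $\mathbf{A}$ with domain $A$, such that: $F(\varphi_{F,A}b)=b$; $\varphi_{F,A}(\mathrm{id}_{FA})=\mathrm{id}_A$; and $\varphi_{F,A}(b'\circ b)=\varphi_{F,A'}(b')\circ\varphi_{F,A}(b)$ whenever $b$ has domain $FA$, $A'$ is the codomain of $\varphi_{F,A}b$, and $b'$ has domain $FA'$. $\mathbf{Lens}$ is the category of small categories and lenses, with composite of $F\colon\mathbf{A}\to\mathbf{B}$, $G\colon\mathbf{B}\to\mathbf{C}$ having get functor $G\circ F$ and puts $\varphi_{G\circ F,A}(c)=\varphi_{F,A}(\varphi_{G,FA}(c))$. The proxy kernel pair of a lens $E\colon\mathbf{B}\to\mathbf{C}$ is the pair of lenses $P_1,P_2\colon\mathbf{K}\to\mathbf{B}$ where $\mathbf{K}$ is the pullback in $\mathbf{Cat}$ of the get functor of $E$ along itself, whose objects and morphisms are pairs $\langle x,y\rangle$ with $Ex=Ey$, the get functors of $P_1,P_2$ are the two projections, and the puts are, for each object $K$ of $\mathbf{K}$ and morphism $b$ of $\mathbf{B}$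 with appropriate domain, $\varphi_{P_1,K}(b)=\langle b,\varphi_{E,P_2K}(Eb)\rangle$ and $\varphi_{P_2,K}(b)=\langle\varphi_{E,P_1K}(Eb),b\rangle$. *)

(* Defs.v *)
From Stdlib Require Import ProofIrrelevance.
Set Implicit Arguments.

Unset Implicit Arguments.
Record Cat : Type := mkCat {
  Ob : Type;
  Mor : Type;
  dom : Mor -> Ob;
  cod : Mor -> Ob;
  idm : Ob -> Mor;
  comp : forall g f : Mor, cod f = dom g -> Mor;
  dom_id : forall a, dom (idm a) = a;
  cod_id : forall a, cod (idm a) = a;
  dom_comp : forall g f (h : cod f = dom g), dom (comp g f h) = dom f;
  cod_comp : forall g f (h : cod f = dom g), cod (comp g f h) = cod g;
  comp_id_r : forall f (h : cod (idm (dom f)) = dom f), comp f (idm (dom f)) h = f;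
  comp_id_l : forall f (h : cod f = dom (idm (cod f))), comp (idm (cod f)) f h = f;
  comp_assoc : forall h g f (p : cod f = dom g) (q : cod g = dom h)
     (r : cod (comp g f p) = dom h) (s : cod f = dom (comp h g q)),
     comp h (comp g f p) r = comp (comp h g q) f s
}.
Set Implicit Arguments.
Arguments dom {c} _.
Arguments cod {c} _.
Arguments idm {c} _.
Arguments comp {c} g f _.

Lemma comp_congr (A : Cat) (g1 g2 f1 f2 : Mor A) p1 p2 :
  g1 = g2 -> f1 = f2 -> comp g1 f1 p1 = comp g2 f2 p2.
Proof. intros -> ->. f_equal. apply proof_irrelevance. Qed.

Lemma sig_ext (X : Type) (P : X -> Prop) (x y : sig P) :
  proj1_sig x = proj1_sig y -> x = y.
Proof.
  destruct x as [x px], y as [y py]; simpl; intros ->.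
  f_equal; apply proof_irrelevance.
Qed.

Unset Implicit Arguments.
Record Functor (A B : Cat) := mkFunctor {
  fob : Ob A -> Ob B;
  fmor : Mor A -> Mor B;
  fdom : forall f, dom (fmor f) = fob (dom f);
  fcod : forall f, cod (fmor f) = fob (cod f);
  fid : forall a, fmor (idm a) = idm (fob a);
  fcomp : forall g f (h : cod f = dom g) (h' : cod (fmor f) = dom (fmor g)),
     fmor (comp g f h) = comp (fmor g) (fmor f) h'
}.
Set Implicit Arguments.
Arguments fob {A B} f _ : rename.
Arguments fmor {A B} f _ : rename.
Arguments fdom {A B} f _ : rename.
Arguments fcod {A B} f _ : rename.
Arguments fid {A B} f _ : rename.
Arguments fcomp {A B} f g f0 h h' : rename.

Lemma fcod_dom (A B : Cat) (F : Functor A B) (g f : Mor A) (h : cod f = dom g) :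
  cod (fmor F f) = dom (fmor F g).
Proof. rewrite fcod, fdom, h. reflexivity. Qed.

Definition fcompose (A B C : Cat) (F : Functor A B) (G : Functor B C) : Functor A C.
Proof.
  refine (@mkFunctor A C (fun a => fob G (fob F a)) (fun f => fmor G (fmor F f)) _ _ _ _).
  - intros f. rewrite fdom, fdom. reflexivity.
  - intros f. rewrite fcod, fcod. reflexivity.
  - intros a. rewrite fid, fid. reflexivity.
  - intros g f h h'. rewrite (fcomp F g f h (fcod_dom F g f h)). apply fcomp.
Defined.

(* A lens: a get functor together with puts phi_A, defined on morphisms b
   with dom b = F A (the proof is an argument). *)
Unset Implicit Arguments.
Record Lens (A B : Cat) := mkLens {
  lget : Functor A B;
  lput : forall (a : Ob A) (b : Mor B), dom b = fob lget a -> Mor A;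
  lput_dom : forall a b p, dom (lput a b p) = a;
  lput_get : forall a b p, fmor lget (lput a b p) = b;
  lput_id : forall a (p : dom (idm (fob lget a)) = fob lget a),
     lput a (idm (fob lget a)) p = idm a;
  lput_comp : forall a b b' (p : dom b = fob lget a)
     (q : dom b' = fob lget (cod (lput a b p)))
     (r : cod b = dom b')
     (s : dom (comp b' b r) = fob lget a)
     (t : cod (lput a b p) = dom (lput (cod (lput a b p)) b' q)),
     lput a (comp b' b r) s = comp (lput (cod (lput a b p)) b' q) (lput a b p) t
}.
Set Implicit Arguments.
Arguments lget {A B} l.
Arguments lput {A B} l a b _.
Arguments lput_dom {A B} l a b p.
Arguments lput_get {A B} l a b p.
Arguments lput_id {A B} l a p.
Arguments lput_comp {A B} l a b b' p q r s t.

Lemma lput_congr (A B : Cat) (L : Lens A B) a1 a2 b1 b2 p1 p2 :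
  a1 = a2 -> b1 = b2 -> lput L a1 b1 p1 = lput L a2 b2 p2.
Proof. intros -> ->. f_equal. apply proof_irrelevance. Qed.

Definition lens_eq (A B : Cat) (F G : Lens A B) : Prop :=
  (forall a, fob (lget F) a = fob (lget G) a) /\
  (forall f, fmor (lget F) f = fmor (lget G) f) /\
  (forall a b p q, lput F a b p = lput G a b q).

Definition lens_comp (A B C : Cat) (F : Lens A B) (G : Lens B C) : Lens A C.
Proof.
  refine (@mkLens A C (fcompose (lget F) (lget G))
    (fun a c p => lput F a (lput G (fob (lget F) a) c p) (lput_dom G _ c p)) _ _ _ _).
  - intros a c p. apply lput_dom.
  - intros a c p. simpl. rewrite lput_get, lput_get. reflexivity.
  - intros a p. simpl.
    transitivity (lput F a (idm (fob (lget F) a)) (dom_id _ _)).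
    + apply lput_congr; [reflexivity | apply lput_id].
    + apply lput_id.
  - intros a c c' p q r s t. simpl in *.
    set (pg := lput_dom G (fob (lget F) a) c p) in *.
    set (g := lput G (fob (lget F) a) c p) in *.
    set (fa := lput F a g pg) in *.
    assert (e1 : fob (lget F) (cod fa) = cod g).
    { rewrite <- (fcod (lget F)). unfold fa. rewrite lput_get. reflexivity. }
    assert (qG : dom c' = fob (lget G) (cod g)).
    { rewrite <- e1. exact q. }
    assert (tG : cod g = dom (lput G (cod g) c' qG)).
    { rewrite lput_dom. reflexivity. }
    pose proof (lput_comp G (fob (lget F) a) c c' p qG r s tG) as HG.
    fold g in HG.
    assert (pc : dom (comp (lput G (cod g) c' qG) g tG) = fob (lget F) a).
    { rewrite dom_comp. exact pg. }
    assert (qF : dom (lput G (cod g) c' qG) = fob (lget F) (cod fa)).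
    { rewrite lput_dom. symmetry. exact e1. }
    assert (tF : cod fa = dom (lput F (cod fa) (lput G (cod g) c' qG) qF)).
    { rewrite lput_dom. reflexivity. }
    transitivity (lput F a (comp (lput G (cod g) c' qG) g tG) pc).
    { apply lput_congr; [reflexivity | exact HG]. }
    etransitivity; [apply (lput_comp F a g (lput G (cod g) c' qG) pg qF tG pc tF)|].
    apply comp_congr; [|reflexivity].
    apply lput_congr; [reflexivity|].
    apply lput_congr; [symmetry; exact e1 | reflexivity].
Defined.

Definition KOb (B C : Cat) (E : Lens B C) : Type :=
  { xy : Ob B * Ob B | fob (lget E) (fst xy) = fob (lget E) (snd xy) }.
Definition KMor (B C : Cat) (E : Lens B C) : Type :=
  { fg : Mor B * Mor B | fmor (lget E) (fst fg) = fmor (lget E) (snd fg) }.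

Lemma kdom_pf (B C : Cat) (E : Lens B C) (k : KMor E) :
  fob (lget E) (dom (fst (proj1_sig k))) = fob (lget E) (dom (snd (proj1_sig k))).
Proof. rewrite <- !fdom, (proj2_sig k). reflexivity. Qed.
Lemma kcod_pf (B C : Cat) (E : Lens B C) (k : KMor E) :
  fob (lget E) (cod (fst (proj1_sig k))) = fob (lget E) (cod (snd (proj1_sig k))).
Proof. rewrite <- !fcod, (proj2_sig k). reflexivity. Qed.

Definition kdom (B C : Cat) (E : Lens B C) (k : KMor E) : KOb E :=
  exist _ (dom (fst (proj1_sig k)), dom (snd (proj1_sig k))) (kdom_pf k).
Definition kcod (B C : Cat) (E : Lens B C) (k : KMor E) : KOb E :=
  exist _ (cod (fst (proj1_sig k)), cod (snd (proj1_sig k))) (kcod_pf k).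

Lemma kid_pf (B C : Cat) (E : Lens B C) (x : KOb E) :
  fmor (lget E) (idm (fst (proj1_sig x))) = fmor (lget E) (idm (snd (proj1_sig x))).
Proof. rewrite !fid, (proj2_sig x). reflexivity. Qed.
Definition kid (B C : Cat) (E : Lens B C) (x : KOb E) : KMor E :=
  exist _ (idm (fst (proj1_sig x)), idm (snd (proj1_sig x))) (kid_pf x).

Definition kh1 (B C : Cat) (E : Lens B C) (k' k : KMor E) (h : kcod k = kdom k') :
  cod (fst (proj1_sig k)) = dom (fst (proj1_sig k')) :=
  f_equal (fun x : KOb E => fst (proj1_sig x)) h.
Definition kh2 (B C : Cat) (E : Lens B C) (k' k : KMor E) (h : kcod k = kdom k') :
  cod (snd (proj1_sig k)) = dom (snd (proj1_sig k')) :=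
  f_equal (fun x : KOb E => snd (proj1_sig x)) h.

Lemma kcomp_pf (B C : Cat) (E : Lens B C) (k' k : KMor E) (h : kcod k = kdom k') :
  fmor (lget E) (comp (fst (proj1_sig k')) (fst (proj1_sig k)) (kh1 h))
  = fmor (lget E) (comp (snd (proj1_sig k')) (snd (proj1_sig k)) (kh2 h)).
Proof.
  rewrite (fcomp (lget E) _ _ (kh1 h) (fcod_dom _ _ _ (kh1 h))).
  rewrite (fcomp (lget E) _ _ (kh2 h) (fcod_dom _ _ _ (kh2 h))).
  apply comp_congr; [exact (proj2_sig k') | exact (proj2_sig k)].
Qed.
Definition kcomp (B C : Cat) (E : Lens B C) (k' k : KMor E) (h : kcod k = kdom k') : KMor E :=
  exist _ (comp (fst (proj1_sig k')) (fst (proj1_sig k)) (kh1 h),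
           comp (snd (proj1_sig k')) (snd (proj1_sig k)) (kh2 h)) (kcomp_pf h).

(* The pullback K of the get functor of E along itself. *)
Definition KCat (B C : Cat) (E : Lens B C) : Cat.
Proof.
  refine (@mkCat (KOb E) (KMor E) (@kdom B C E) (@kcod B C E) (@kid B C E) (@kcomp B C E)
            _ _ _ _ _ _ _).
  - intros [[x y] e]. apply sig_ext. simpl. rewrite !dom_id. reflexivity.
  - intros [[x y] e]. apply sig_ext. simpl. rewrite !cod_id. reflexivity.
  - intros g f h. apply sig_ext. simpl. rewrite !dom_comp. reflexivity.
  - intros g f h. apply sig_ext. simpl. rewrite !cod_comp. reflexivity.
  - intros [[f g] e] h. apply sig_ext. simpl. f_equal; apply comp_id_r.
  - intros [[f g] e] h. apply sig_ext. simpl. f_equal; apply comp_id_l.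
  - intros h g f p q r s. apply sig_ext. simpl. f_equal; apply comp_assoc.
Defined.

Definition kproj1 (B C : Cat) (E : Lens B C) : Functor (KCat E) B.
Proof.
  refine (@mkFunctor (KCat E) B (fun x => fst (proj1_sig x)) (fun k => fst (proj1_sig k))
            _ _ _ _); try reflexivity.
  intros g f h h'. apply comp_congr; reflexivity.
Defined.
Definition kproj2 (B C : Cat) (E : Lens B C) : Functor (KCat E) B.
Proof.
  refine (@mkFunctor (KCat E) B (fun x => snd (proj1_sig x)) (fun k => snd (proj1_sig k))
            _ _ _ _); try reflexivity.
  intros g f h h'. apply comp_congr; reflexivity.
Defined.

Lemma p1_dom_pf (B C : Cat) (E : Lens B C) (x : KOb E) (b : Mor B)
  (p : dom b = fst (proj1_sig x)) :
  dom (fmor (lget E) b) = fob (lget E) (snd (proj1_sig x)).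
Proof. rewrite fdom, p. exact (proj2_sig x). Qed.
Arguments p1_dom_pf {B C E x b} p.
Lemma p1_put_pf (B C : Cat) (E : Lens B C) (x : KOb E) (b : Mor B)
  (p : dom b = fst (proj1_sig x)) :
  fmor (lget E) b = fmor (lget E) (lput E (snd (proj1_sig x)) (fmor (lget E) b) (p1_dom_pf p)).
Proof. rewrite lput_get. reflexivity. Qed.
Arguments p1_put_pf {B C E x b} p.
Definition p1_put (B C : Cat) (E : Lens B C) (x : KOb E) (b : Mor B)
  (p : dom b = fst (proj1_sig x)) : KMor E :=
  exist _ (b, lput E (snd (proj1_sig x)) (fmor (lget E) b) (p1_dom_pf p)) (p1_put_pf p).

Lemma p2_dom_pf (B C : Cat) (E : Lens B C) (x : KOb E) (b : Mor B)
  (p : dom b = snd (proj1_sig x)) :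
  dom (fmor (lget E) b) = fob (lget E) (fst (proj1_sig x)).
Proof. rewrite fdom, p. symmetry. exact (proj2_sig x). Qed.
Arguments p2_dom_pf {B C E x b} p.
Lemma p2_put_pf (B C : Cat) (E : Lens B C) (x : KOb E) (b : Mor B)
  (p : dom b = snd (proj1_sig x)) :
  fmor (lget E) (lput E (fst (proj1_sig x)) (fmor (lget E) b) (p2_dom_pf p)) = fmor (lget E) b.
Proof. rewrite lput_get. reflexivity. Qed.
Arguments p2_put_pf {B C E x b} p.
Definition p2_put (B C : Cat) (E : Lens B C) (x : KOb E) (b : Mor B)
  (p : dom b = snd (proj1_sig x)) : KMor E :=
  exist _ (lput E (fst (proj1_sig x)) (fmor (lget E) b) (p2_dom_pf p), b) (p2_put_pf p).

Definition proxy_P1 (B C : Cat) (E : Lens B C) : Lens (KCat E) B.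
Proof.
  refine (@mkLens (KCat E) B (kproj1 E) (@p1_put B C E) _ _ _ _).
  - intros [[x y] e] b p. apply sig_ext. simpl in *.
    rewrite lput_dom, p. reflexivity.
  - reflexivity.
  - intros [[x y] e] p. apply sig_ext. simpl in *. f_equal.
    transitivity (lput E y (idm (fob (lget E) y)) (dom_id _ _)).
    + apply lput_congr; [reflexivity|]. rewrite fid, e. reflexivity.
    + apply lput_id.
  - intros [[x y] e] b b' p q r s t. apply sig_ext. simpl in *. f_equal.
    + apply comp_congr; reflexivity.
    + set (l := lput E y (fmor (lget E) b) (p1_dom_pf (x:=exist _ (x, y) e) p)) in *.
      assert (r' : cod (fmor (lget E) b) = dom (fmor (lget E) b')).
      { apply fcod_dom. exact r. }
      assert (s' : dom (comp (fmor (lget E) b') (fmor (lget E) b) r') = fob (lget E) y).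
      { rewrite dom_comp, fdom, p. exact e. }
      assert (q' : dom (fmor (lget E) b') = fob (lget E) (cod l)).
      { rewrite fdom, q. rewrite <- !fcod. unfold l. rewrite lput_get. reflexivity. }
      assert (t' : cod l = dom (lput E (cod l) (fmor (lget E) b') q')).
      { rewrite lput_dom. reflexivity. }
      transitivity (lput E y (comp (fmor (lget E) b') (fmor (lget E) b) r') s').
      { apply lput_congr; [reflexivity|]. apply fcomp. }
      etransitivity; [apply (lput_comp E y (fmor (lget E) b) (fmor (lget E) b') _ q' r' s' t')|].
      apply comp_congr; [|reflexivity].
      apply lput_congr; reflexivity.
Defined.

Definition proxy_P2 (B C : Cat) (E : Lens B C) : Lens (KCat E) B.
Proof.
  refine (@mkLens (KCat E) B (kproj2 E) (@p2_put B C E) _ _ _ _).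
  - intros [[x y] e] b p. apply sig_ext. simpl in *.
    rewrite lput_dom, p. reflexivity.
  - reflexivity.
  - intros [[x y] e] p. apply sig_ext. simpl in *. f_equal.
    transitivity (lput E x (idm (fob (lget E) x)) (dom_id _ _)).
    + apply lput_congr; [reflexivity|]. rewrite fid, e. reflexivity.
    + apply lput_id.
  - intros [[x y] e] b b' p q r s t. apply sig_ext. simpl in *. f_equal.
    + set (l := lput E x (fmor (lget E) b) (p2_dom_pf (x:=exist _ (x, y) e) p)) in *.
      assert (r' : cod (fmor (lget E) b) = dom (fmor (lget E) b')).
      { apply fcod_dom. exact r. }
      assert (s' : dom (comp (fmor (lget E) b') (fmor (lget E) b) r') = fob (lget E) x).
      { rewrite dom_comp, fdom, p. symmetry. exact e. }
      assert (q' : dom (fmor (lget E) b') = fob (lget E) (cod l)).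
      { rewrite fdom, q. rewrite <- !fcod. unfold l. rewrite lput_get. reflexivity. }
      assert (t' : cod l = dom (lput E (cod l) (fmor (lget E) b') q')).
      { rewrite lput_dom. reflexivity. }
      transitivity (lput E x (comp (fmor (lget E) b') (fmor (lget E) b) r') s').
      { apply lput_congr; [reflexivity|]. apply fcomp. }
      etransitivity; [apply (lput_comp E x (fmor (lget E) b) (fmor (lget E) b') _ q' r' s' t')|].
      apply comp_congr; [|reflexivity].
      apply lput_congr; reflexivity.
    + apply comp_congr; reflexivity.
Defined.

Definition lens_epi (B C : Cat) (E : Lens B C) : Prop :=
  forall (D : Cat) (G H : Lens C D),
    lens_eq (lens_comp E G) (lens_comp E H) -> lens_eq G H.

Definition lens_coequaliser (K B C : Cat) (P1 P2 : Lens K B) (E : Lens B C) : Prop :=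
  lens_eq (lens_comp P1 E) (lens_comp P2 E) /\
  forall (D : Cat) (G : Lens B D),
    lens_eq (lens_comp P1 G) (lens_comp P2 G) ->
    exists H : Lens C D,
      lens_eq (lens_comp E H) G /\
      (forall H' : Lens C D, lens_eq (lens_comp E H') G -> lens_eq H' H).

Definition lens_regular_epi (B C : Cat) (E : Lens B C) : Prop :=
  exists (K : Cat) (P1 P2 : Lens K B), lens_coequaliser P1 P2 E.

(* Main.v *)
Require Import Defs.
From Stdlib Require Import ProofIrrelevance ClassicalEpsilon Bool.
Set Implicit Arguments.

Definition DOb (C : Cat) (chi : Ob C -> bool) :=
  { p : Ob C * bool | snd p = true -> chi (fst p) = true }.
Definition DMor (C : Cat) (chi : Ob C -> bool) :=
  { p : Mor C * bool | snd p = true -> chi (dom (fst p)) = true }.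

Arguments DOb {C} chi.
Arguments DMor {C} chi.

Lemma andb_r (x y : bool) : x && y = true -> y = true.
Proof. destruct x, y; auto. Qed.

Definition ddom (C : Cat) (chi : Ob C -> bool) (m : DMor chi) : DOb chi :=
  exist _ (dom (fst (proj1_sig m)), snd (proj1_sig m)) (proj2_sig m).
Definition dcod (C : Cat) (chi : Ob C -> bool) (m : DMor chi) : DOb chi :=
  exist (fun p : Ob C * bool => snd p = true -> chi (fst p) = true)
   (cod (fst (proj1_sig m)), snd (proj1_sig m) && chi (cod (fst (proj1_sig m))))
   (@andb_r _ _).

Lemma didm_pf (C : Cat) (chi : Ob C -> bool) (o : DOb chi) :
  snd (idm (fst (proj1_sig o)), snd (proj1_sig o)) = true ->
  chi (dom (fst (idm (fst (proj1_sig o)), snd (proj1_sig o)))) = true.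
Proof. simpl. rewrite dom_id. exact (proj2_sig o). Qed.
Definition didm (C : Cat) (chi : Ob C -> bool) (o : DOb chi) : DMor chi :=
  exist _ _ (didm_pf o).

Definition dh (C : Cat) (chi : Ob C -> bool) (g f : DMor chi) (h : dcod f = ddom g) :
  cod (fst (proj1_sig f)) = dom (fst (proj1_sig g)) :=
  f_equal (fun o : DOb chi => fst (proj1_sig o)) h.

Lemma dcomp_pf (C : Cat) (chi : Ob C -> bool) (g f : DMor chi) (h : dcod f = ddom g) :
  snd (comp (fst (proj1_sig g)) (fst (proj1_sig f)) (dh h), snd (proj1_sig f)) = true ->
  chi (dom (fst (comp (fst (proj1_sig g)) (fst (proj1_sig f)) (dh h), snd (proj1_sig f)))) = true.
Proof. simpl. rewrite dom_comp. exact (proj2_sig f). Qed.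
Definition dcomp (C : Cat) (chi : Ob C -> bool) (g f : DMor chi) (h : dcod f = ddom g) : DMor chi :=
  exist _ _ (dcomp_pf h).

Definition DCat (C : Cat) (chi : Ob C -> bool)
  (hchi : forall f : Mor C, chi (cod f) = true -> chi (dom f) = true) : Cat.
Proof.
  refine (@mkCat (DOb chi) (DMor chi) (@ddom C chi) (@dcod C chi) (@didm C chi) (@dcomp C chi)
            _ _ _ _ _ _ _).
  - intros [[x i] e]. apply sig_ext. simpl. rewrite dom_id. reflexivity.
  - intros [[x i] e]. apply sig_ext. simpl in *. rewrite cod_id. f_equal.
    destruct i; simpl; [rewrite (e eq_refl)|]; reflexivity.
  - intros g f h. apply sig_ext. simpl. rewrite dom_comp. reflexivity.
  - intros [[g j] pg] [[f i] pf] h. apply sig_ext. simpl.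
    pose proof (f_equal (fun o : DOb chi => snd (proj1_sig o)) h) as hs.
    pose proof (f_equal (fun o : DOb chi => fst (proj1_sig o)) h) as hf.
    simpl in hs, hf.
    rewrite cod_comp. f_equal. rewrite <- hs.
    destruct (chi (cod g)) eqn:Hc.
    + assert (chi (cod f) = true) by (rewrite hf; apply hchi; exact Hc).
      rewrite H. destruct i; reflexivity.
    + destruct i, (chi (cod f)); reflexivity.
  - intros [[f i] e] h. apply sig_ext. simpl. f_equal. apply comp_id_r.
  - intros [[f i] e] h. apply sig_ext. simpl. f_equal. apply comp_id_l.
  - intros h g f p q r s. apply sig_ext. simpl. f_equal. apply comp_assoc.
Defined.
Arguments DCat {C} chi hchi.

Lemma false_pf (P : Prop) : false = true -> P.
Proof. discriminate. Qed.

Definition GF (C : Cat) (chi : Ob C -> bool)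
  (hchi : forall f : Mor C, chi (cod f) = true -> chi (dom f) = true) : Functor C (DCat chi hchi).
Proof.
  refine (@mkFunctor C (DCat chi hchi)
    (fun c => exist (fun p : Ob C * bool => snd p = true -> chi (fst p) = true) (c, false) (@false_pf _))
    (fun f => exist (fun p : Mor C * bool => snd p = true -> chi (dom (fst p)) = true) (f, false) (@false_pf _))
    _ _ _ _).
  - intros f. apply sig_ext. reflexivity.
  - intros f. apply sig_ext. reflexivity.
  - intros a. apply sig_ext. reflexivity.
  - intros g f h h'. apply sig_ext. simpl. f_equal. apply comp_congr; reflexivity.
Defined.

Arguments GF {C chi} hchi.

Definition GL (C : Cat) (chi : Ob C -> bool)
  (hchi : forall f : Mor C, chi (cod f) = true -> chi (dom f) = true) : Lens C (DCat chi hchi).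
Proof.
  refine (@mkLens C (DCat chi hchi) (GF hchi) (fun c d p => fst (proj1_sig d)) _ _ _ _).
  - intros a d p. exact (f_equal (fun o : DOb chi => fst (proj1_sig o)) p).
  - intros a [[d i] e] p. apply sig_ext. simpl.
    pose proof (f_equal (fun o : DOb chi => snd (proj1_sig o)) p) as hs. simpl in hs.
    rewrite hs. reflexivity.
  - intros a p. reflexivity.
  - intros a b b' p q r s t. simpl. apply comp_congr; reflexivity.
Defined.

Arguments GL {C chi} hchi.

Definition HF (C : Cat) (chi : Ob C -> bool)
  (hchi : forall f : Mor C, chi (cod f) = true -> chi (dom f) = true) : Functor C (DCat chi hchi).
Proof.
  refine (@mkFunctor C (DCat chi hchi)
    (fun c => exist (fun p : Ob C * bool => snd p = true -> chi (fst p) = true) (c, chi c) (fun e : chi c = true => e))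
    (fun f => exist (fun p : Mor C * bool => snd p = true -> chi (dom (fst p)) = true) (f, chi (dom f)) (fun e : chi (dom f) = true => e))
    _ _ _ _).
  - intros f. apply sig_ext. reflexivity.
  - intros f. apply sig_ext. simpl. f_equal.
    destruct (chi (cod f)) eqn:Hc.
    + rewrite (hchi f Hc). reflexivity.
    + destruct (chi (dom f)); reflexivity.
  - intros a. apply sig_ext. simpl. rewrite dom_id. reflexivity.
  - intros g f h h'. apply sig_ext. simpl. rewrite dom_comp. f_equal.
    apply comp_congr; reflexivity.
Defined.

Arguments HF {C chi} hchi.

Definition HL (C : Cat) (chi : Ob C -> bool)
  (hchi : forall f : Mor C, chi (cod f) = true -> chi (dom f) = true) : Lens C (DCat chi hchi).
Proof.
  refine (@mkLens C (DCat chi hchi) (HF hchi) (fun c d p => fst (proj1_sig d)) _ _ _ _).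
  - intros a d p. exact (f_equal (fun o : DOb chi => fst (proj1_sig o)) p).
  - intros a [[d i] e] p. apply sig_ext. simpl.
    pose proof (f_equal (fun o : DOb chi => snd (proj1_sig o)) p) as hs.
    pose proof (f_equal (fun o : DOb chi => fst (proj1_sig o)) p) as hf.
    simpl in hs, hf. rewrite hf, hs. reflexivity.
  - intros a p. reflexivity.
  - intros a b b' p q r s t. simpl. apply comp_congr; reflexivity.
Defined.

Arguments HL {C chi} hchi.

Definition inS (B C : Cat) (E : Lens B C) (c : Ob C) : Prop :=
  exists b, fob (lget E) b = c.
Definition chiE (B C : Cat) (E : Lens B C) (c : Ob C) : bool :=
  if excluded_middle_informative (inS E c) then false else true.

Lemma chiE_false (B C : Cat) (E : Lens B C) c : inS E c -> chiE E c = false.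
Proof. unfold chiE. destruct excluded_middle_informative; tauto. Qed.

Lemma chiE_back (B C : Cat) (E : Lens B C) (f : Mor C) :
  chiE E (cod f) = true -> chiE E (dom f) = true.
Proof.
  unfold chiE. destruct (excluded_middle_informative (inS E (dom f))) as [[b hb]|]; auto.
  destruct excluded_middle_informative as [|n]; auto.
  exfalso; apply n.
  assert (p : dom f = fob (lget E) b) by (symmetry; exact hb).
  exists (cod (lput E b f p)).
  rewrite <- fcod, lput_get. reflexivity.
Qed.

Lemma epi_surj (B C : Cat) (E : Lens B C) : lens_epi E -> forall c, inS E c.
Proof.
  intros epi c.
  destruct (epi _ (GL (@chiE_back B C E)) (HL (@chiE_back B C E))) as [Hob _].
  - split; [|split].
    + intros a. apply sig_ext. simpl. rewrite chiE_false; [reflexivity|]. exists a; reflexivity.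
    + intros f. apply sig_ext. simpl. rewrite chiE_false; [reflexivity|].
      exists (dom f). rewrite fdom. reflexivity.
    + intros a b p q. simpl. apply lput_congr; reflexivity.
  - pose proof (f_equal (fun o : DOb (chiE E) => snd (proj1_sig o)) (Hob c)) as hs.
    simpl in hs. unfold chiE in hs. destruct excluded_middle_informative; auto. discriminate.
Qed.

Lemma lens_eq_sym (A B : Cat) (F G : Lens A B) : lens_eq F G -> lens_eq G F.
Proof. intros [h1 [h2 h3]]. split; [|split]; intros; symmetry; auto. Qed.
Lemma lens_eq_trans (A B : Cat) (F G H : Lens A B) : lens_eq F G -> lens_eq G H -> lens_eq F H.
Proof.
  intros [h1 [h2 h3]] [k1 [k2 k3]]. split; [|split]; intros.
  - rewrite h1; auto.
  - rewrite h2; auto.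
  - assert (p' : dom b = fob (lget G) a) by (rewrite <- h1; exact p).
    rewrite (h3 a b p p'); auto.
Qed.

Lemma proxy_coeq_part (B C : Cat) (E : Lens B C) :
  lens_eq (lens_comp (proxy_P1 E) E) (lens_comp (proxy_P2 E) E).
Proof.
  split; [intros [[x y] e]; exact e | split; [intros [[f g] e]; exact e|]].
  intros [[x y] e] c p q. apply sig_ext. simpl. f_equal; apply lput_congr; auto; rewrite lput_get; reflexivity.
Qed.


Lemma fact_ob (B C D : Cat) (E : Lens B C) (G : Lens B D)
  (hG : lens_eq (lens_comp (proxy_P1 E) G) (lens_comp (proxy_P2 E) G))
  b b' (e : fob (lget E) b = fob (lget E) b') : fob (lget G) b = fob (lget G) b'.
Proof. exact (proj1 hG (exist _ (b, b') e)). Qed.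

Lemma fact_mor (B C D : Cat) (E : Lens B C) (G : Lens B D)
  (hG : lens_eq (lens_comp (proxy_P1 E) G) (lens_comp (proxy_P2 E) G))
  f f' (e : fmor (lget E) f = fmor (lget E) f') : fmor (lget G) f = fmor (lget G) f'.
Proof. exact (proj1 (proj2 hG) (exist _ (f, f') e)). Qed.

Lemma fact_put (B C D : Cat) (E : Lens B C) (G : Lens B D)
  (hG : lens_eq (lens_comp (proxy_P1 E) G) (lens_comp (proxy_P2 E) G))
  b b' (e : fob (lget E) b = fob (lget E) b') d (p : dom d = fob (lget G) b)
  (p' : dom d = fob (lget G) b') (r : dom (fmor (lget E) (lput G b' d p')) = fob (lget E) b) :
  lput G b d p = lput E b (fmor (lget E) (lput G b' d p')) r.
Proof.
  pose proof (proj2 (proj2 hG) (exist _ (b, b') e) d p p') as H.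
  apply (f_equal (fun k : KMor E => fst (proj1_sig k))) in H. simpl in H.
  rewrite H. apply lput_congr; reflexivity.
Qed.

Definition sec (B C : Cat) (E : Lens B C) (sur : forall c, inS E c) (c : Ob C) : Ob B :=
  proj1_sig (constructive_indefinite_description _ (sur c)).
Lemma sec_spec (B C : Cat) (E : Lens B C) (sur : forall c, inS E c) c :
  fob (lget E) (sec sur c) = c.
Proof. unfold sec. destruct constructive_indefinite_description; auto. Qed.
Definition lift (B C : Cat) (E : Lens B C) (sur : forall c, inS E c) (f : Mor C) : Mor B :=
  lput E (sec sur (dom f)) f (eq_sym (sec_spec sur (dom f))).
Lemma lift_get (B C : Cat) (E : Lens B C) (sur : forall c, inS E c) f :
  fmor (lget E) (lift sur f) = f.
Proof. apply lput_get. Qed.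

Definition QF (B C D : Cat) (E : Lens B C) (G : Lens B D)
  (hG : lens_eq (lens_comp (proxy_P1 E) G) (lens_comp (proxy_P2 E) G))
  (sur : forall c, inS E c) : Functor C D.
Proof.
  refine (@mkFunctor C D (fun c => fob (lget G) (sec sur c))
     (fun f => fmor (lget G) (lift sur f)) _ _ _ _).
  - intros f. rewrite fdom. unfold lift. rewrite lput_dom. reflexivity.
  - intros f. rewrite fcod. apply (fact_ob hG).
    rewrite <- fcod, lift_get, sec_spec. reflexivity.
  - intros a. rewrite <- fid. apply (fact_mor hG).
    rewrite lift_get, fid, sec_spec. reflexivity.
  - intros g f h h'.
    set (ft := lift sur f).
    assert (pg : dom g = fob (lget E) (cod ft)).
    { rewrite <- fcod. unfold ft. rewrite lift_get. symmetry; exact h. }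
    set (gt := lput E (cod ft) g pg).
    assert (hc : cod ft = dom gt) by (unfold gt; rewrite lput_dom; reflexivity).
    transitivity (fmor (lget G) (comp gt ft hc)).
    + apply (fact_mor hG). rewrite lift_get.
      rewrite (fcomp (lget E) gt ft hc (fcod_dom _ _ _ hc)).
      apply comp_congr; [unfold gt; rewrite lput_get | unfold ft; rewrite lift_get]; reflexivity.
    + rewrite (fcomp (lget G) gt ft hc (fcod_dom _ _ _ hc)).
      apply comp_congr; [|reflexivity].
      apply (fact_mor hG). unfold gt. rewrite lput_get, lift_get. reflexivity.
Defined.

Lemma QL_dom (B C D : Cat) (E : Lens B C) (G : Lens B D)
  (hG : lens_eq (lens_comp (proxy_P1 E) G) (lens_comp (proxy_P2 E) G))
  (sur : forall c, inS E c) c d (p : dom d = fob (lget G) (sec sur c)) :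
  dom (fmor (lget E) (lput G (sec sur c) d p)) = c.
Proof. rewrite fdom, lput_dom, sec_spec. reflexivity. Qed.

Definition QL (B C D : Cat) (E : Lens B C) (G : Lens B D)
  (hG : lens_eq (lens_comp (proxy_P1 E) G) (lens_comp (proxy_P2 E) G))
  (sur : forall c, inS E c) : Lens C D.
Proof.
  refine (@mkLens C D (QF hG sur) (fun c d p => fmor (lget E) (lput G (sec sur c) d p)) _ _ _ _).
  - intros c d p. apply (QL_dom hG).
  - intros c d p. simpl.
    transitivity (fmor (lget G) (lput G (sec sur c) d p)); [|apply lput_get].
    apply (fact_mor hG). rewrite lift_get. reflexivity.
  - intros c p. simpl.
    transitivity (fmor (lget E) (idm (sec sur c))).
    + f_equal. etransitivity; [|apply (lput_id G (sec sur c) (dom_id _ _))].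
      apply lput_congr; reflexivity.
    + rewrite fid, sec_spec. reflexivity.
  - intros c d d' p q r s t. simpl in *.
    set (l := lput G (sec sur c) d p) in *.
    assert (q' : dom d' = fob (lget G) (cod l)).
    { rewrite <- fcod. unfold l. rewrite lput_get. symmetry; exact r. }
    assert (t' : cod l = dom (lput G (cod l) d' q')) by (rewrite lput_dom; reflexivity).
    pose proof (lput_comp G (sec sur c) d d' p q' r s t') as HC. fold l in HC.
    rewrite HC.
    rewrite (fcomp (lget E) _ _ t' (fcod_dom _ _ _ t')).
    apply comp_congr; [|reflexivity].
    assert (e : fob (lget E) (cod l) = fob (lget E) (sec sur (cod (fmor (lget E) l)))).
    { rewrite sec_spec, fcod. reflexivity. }
    assert (rr : dom (fmor (lget E) (lput G (sec sur (cod (fmor (lget E) l))) d' q))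
                 = fob (lget E) (cod l)).
    { rewrite fdom, lput_dom. symmetry; exact e. }
    rewrite (fact_put hG _ _ e d' q' q rr). rewrite lput_get. reflexivity.
Defined.

Lemma QL_fact (B C D : Cat) (E : Lens B C) (G : Lens B D)
  (hG : lens_eq (lens_comp (proxy_P1 E) G) (lens_comp (proxy_P2 E) G))
  (sur : forall c, inS E c) : lens_eq (lens_comp E (QL hG sur)) G.
Proof.
  split; [|split].
  - intros a. simpl. apply (fact_ob hG). apply sec_spec.
  - intros f. simpl. apply (fact_mor hG). apply lift_get.
  - intros a d p q. simpl in *.
    assert (e : fob (lget E) a = fob (lget E) (sec sur (fob (lget E) a))) by (rewrite sec_spec; reflexivity).
    assert (rr : dom (fmor (lget E) (lput G (sec sur (fob (lget E) a)) d p)) = fob (lget E) a).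
    { rewrite fdom, lput_dom. symmetry; exact e. }
    rewrite (fact_put hG _ _ e d q p rr). apply lput_congr; reflexivity.
Qed.

Theorem corollary6p4 (B C : Cat) (E : Lens B C) :
  lens_epi E ->
  lens_coequaliser (proxy_P1 E) (proxy_P2 E) E /\ lens_regular_epi E.
Proof.
  intros epi.
  pose proof (epi_surj epi) as sur.
  assert (co : lens_coequaliser (proxy_P1 E) (proxy_P2 E) E).
  { split; [apply proxy_coeq_part|].
    intros D G hG. exists (QL hG sur). split; [apply QL_fact|].
    intros H' h'. apply epi. eapply lens_eq_trans; [exact h'|].
    apply lens_eq_sym, QL_fact. }
  split; [exact co|]. exists (KCat E), (proxy_P1 E), (proxy_P2 E). exact co.
Qed.
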